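(* Let $G$ be a graph and let $S\subseteq V(G)$ be a twin cover of $G$. Then there exists an imbalance optimal ordering of $G$ in which, for every connected component $C$ of $G-S$, the vertices of $C$ appear consecutively.
   Context: All graphs are finite, simple and undirected. An ordering $\sigma$ of $V(G)$ assigns to each vertex $v$ the sets $N_L(v,\sigma)$ and $N_R(v,\sigma)$ of neighbours of $v$ preceding and following $v$, respectively; $\mathcal{I}(v,\sigma)=\big||N_L(v,\sigma)|-|N_R(v,\sigma)|\big|$, $\mathcal{I}(\sigma)=\sum_v\mathcal{I}(v,\sigma)$, $\mathcal{I}(G)=\min_\sigma\mathcal{I}(\sigma)$, and $\sigma$ is imbalance optimal if $\mathcal{I}(\sigma)=\mathcal{I}(G)$. A twin cover of $G$ is a set $S\subseteq V(G)$ such that every connected component $X$ of $G-S$ is a set of true twins in $G$ ($N[u]=N[v]$ for all $u,v\in X$). *)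

(* Defs.v *)
From mathcomp Require Import all_boot.
Set Implicit Arguments. Unset Strict Implicit. Unset Printing Implicit Defensive.

Definition simple_graph (T : finType) (e : rel T) : Prop :=
  symmetric e /\ irreflexive e.

Definition is_ordering (T : finType) (s : seq T) : Prop := perm_eq s (enum T).

Definition NL (T : finType) (e : rel T) (s : seq T) (v : T) : {set T} :=
  [set u | e v u & index u s < index v s].
Definition NR (T : finType) (e : rel T) (s : seq T) (v : T) : {set T} :=
  [set u | e v u & index v s < index u s].

(* | |N_L| - |N_R| | as a natural number. *)
Definition imb_v (T : finType) (e : rel T) (s : seq T) (v : T) : nat :=
  maxn #|NL e s v| #|NR e s v| - minn #|NL e s v| #|NR e s v|.

Definition imbalance (T : finType) (e : rel T) (s : seq T) : nat :=
  \sum_(v : T) imb_v e s v.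

Definition imbalance_optimal (T : finType) (e : rel T) (s : seq T) : Prop :=
  is_ordering s /\ forall s', is_ordering s' -> imbalance e s <= imbalance e s'.

Definition del_rel (T : finType) (e : rel T) (S : {set T}) : rel T :=
  fun x y => [&& e x y, x \notin S & y \notin S].

Definition same_comp (T : finType) (e : rel T) (S : {set T}) (x y : T) : bool :=
  [&& x \notin S, y \notin S & connect (del_rel e S) x y].

(* S is a twin cover: every component of G - S is a set of true twins in G
   (equal closed neighbourhoods). *)
Definition twin_cover (T : finType) (e : rel T) (S : {set T}) : Prop :=
  forall u v, same_comp e S u v ->
    forall w, ((w == u) || e u w) = ((w == v) || e v w).

Definition components_consecutive (T : finType) (e : rel T) (S : {set T})
  (s : seq T) : Prop :=
  forall x y z, same_comp e S x y ->
    index x s <= index z s <= index y s -> same_comp e S x z.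

(* Main.v *)
Require Import Defs.
From mathcomp Require Import all_boot.
From mathcomp Require Import all_order all_algebra zify.
From Stdlib Require Import Classical.
Import Order.TTheory GRing.Theory Num.Theory.

Set Implicit Arguments. Unset Strict Implicit. Unset Printing Implicit Defensive.

Lemma lexlt (a1 a b1 b B : nat) : (a < B)%N -> (b < B)%N ->
  (a1 * B + a < b1 * B + b)%N = ((a1 < b1) || ((a1 == b1) && (a < b)))%N.
Proof. move=> ha hb. case: (ltngtP a1 b1) => h /=.
- apply/idP. have: (a1.+1 * B <= b1 * B)%N by apply: leq_mul. rewrite mulSn. lia.
- apply/negbTE. rewrite -leqNgt. have: (b1.+1 * B <= a1 * B)%N by apply: leq_mul. rewrite mulSn. lia.
- subst. by rewrite ltn_add2l.
Qed.

Lemma nat_ivt (f : nat -> nat) a : (forall i, f i.+1 <= (f i).+1)%N ->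
  forall n H, (f a <= H <= f (a + n))%N -> exists2 i, (a <= i <= a + n)%N & f i = H.
Proof.
move=> hf; elim=> [|n IH] H hH.
  exists a; first lia. rewrite addn0 in hH; apply/eqP; rewrite eqn_leq. lia.
case: (leqP H (f (a + n))) => h.
  have [i hi <-] : exists2 i, (a <= i <= a + n)%N & f i = H by apply: IH; lia.
  exists i => //; lia.
exists (a + n.+1)%N; first lia.
have := hf (a + n)%N. rewrite addnS in hH *. move=> h2. apply/eqP; rewrite eqn_leq; lia.
Qed.

Local Open Scope ring_scope.

Definition keep (P : Prop) := P.
Lemma arith (x : int) (r:int) : 0 <= r -> exists h : int, 0 <= h <= r /\
  keep (`|x + 2*h| + `|x+2*h+2| + 2*r <= `|x| + `|x + 2 + 2 * r|).
Proof. move=> r0. rewrite /keep. case: (boolP (0 <= x)) => hx. exists 0. split; lia.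
case: (boolP (x + 2 + 2*r <= 0)) => hy. exists r; split; lia.
case: (boolP (odd `|x|%N)) => ho.
- exists ((- x - 1) %/ 2)%Z. split. lia. lia.
- exists ((- x - 2) %/ 2)%Z. split; lia.
Qed.

Lemma sumZ (T : finType) (F : T -> nat) : (\sum_u F u)%N%:Z = \sum_u (F u)%:Z.
Proof. by rewrite (big_morph Posz PoszD (erefl _)). Qed.

Lemma sum_pred1 (T : finType) (a : T) : \sum_u ((u == a) : nat)%:Z = 1.
Proof. rewrite (bigD1 a) //= eqxx big1 ?addr0 // => u /negbTE -> //. Qed.

Lemma card_setZ (T : finType) (P : pred T) : (#|[set u | P u]|)%:Z = \sum_u (P u : nat)%:Z.
Proof.
rewrite -sumZ -sum1_card big_mkcond /=; congr Posz; apply: eq_bigr => u _.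
by rewrite inE; case: (P u).
Qed.

Section Imb.
Variables (T : finType) (e : rel T).
Hypothesis esym : symmetric e.
Hypothesis eirr : irreflexive e.

Definition sg (k : T -> nat) (u v : T) : int :=
  ((k u < k v)%N : nat)%:Z - ((k v < k u)%N : nat)%:Z.
Definition D (k : T -> nat) (v : T) : int := \sum_u ((e v u : nat)%:Z * sg k u v).
Definition Imb k : int := \sum_v `|D k v|.

Lemma sg_lt k u v : (k u < k v)%N -> sg k u v = 1.
Proof. rewrite /sg => h. have h2: (k v < k u)%N = false by apply/negbTE; rewrite -leqNgt ltnW. by rewrite h h2. Qed.
Lemma sg_gt k u v : (k v < k u)%N -> sg k u v = -1.
Proof. rewrite /sg => h. have h2: (k u < k v)%N = false by apply/negbTE; rewrite -leqNgt ltnW. by rewrite h h2. Qed.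

Lemma DE k v : D k v = (#|[set u | e v u & (k u < k v)%N]|)%:Z - (#|[set u | e v u & (k v < k u)%N]|)%:Z.
Proof.
rewrite !card_setZ -sumrB; apply: eq_bigr => u _; rewrite /sg.
by case: (e v u); rewrite ?mul1r ?mul0r ?subrr.
Qed.

Lemma imbalanceE (s : seq T) : (imbalance e s)%:Z = Imb (fun u => index u s).
Proof.
rewrite /imbalance /Imb sumZ; apply: eq_bigr => v _.
rewrite DE /imb_v /NL /NR. lia.
Qed.

Lemma D_ext k1 k2 v : (forall u, e v u -> (k1 u < k1 v)%N = (k2 u < k2 v)%N /\ (k1 v < k1 u)%N = (k2 v < k2 u)%N) ->
  D k1 v = D k2 v.
Proof.
move=> h; apply: eq_bigr => u _; case: (boolP (e v u)) => evu; last by rewrite !mul0r.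
by rewrite /sg; case: (h u evu) => -> ->.
Qed.

End Imb.
Section Graph.
Variables (T : finType) (e : rel T) (S : {set T}).
Hypothesis esym : symmetric e.
Hypothesis eirr : irreflexive e.
Hypothesis tc : twin_cover e S.

Local Notation sc := (same_comp e S).
Local Notation D := (D e).
Local Notation Imb := (Imb e).
Definition Phi k : int := \sum_(v | v \notin S) `|D k v|.

Lemma del_sym : connect_sym (del_rel e S).
Proof. apply: sym_connect_sym => x y; rewrite /del_rel esym; by case: (x \in S); case: (y \in S); rewrite ?andbF. Qed.

Lemma sc_notS x y : sc x y -> (x \notin S) && (y \notin S).
Proof. by case/and3P => -> ->. Qed.

Lemma sc_sym x y : sc x y -> sc y x.
Proof. case/and3P => hx hy hc; apply/and3P; split => //; by rewrite del_sym. Qed.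

Lemma sc_trans x y z : sc x y -> sc y z -> sc x z.
Proof. case/and3P => hx hy hc; case/and3P => _ hz hc2; apply/and3P; split => //; exact: connect_trans hc hc2. Qed.

Lemma sc_refl x : x \notin S -> sc x x.
Proof. move=> hx; apply/and3P; split => //; exact: connect0. Qed.

Lemma sc_edge x y : e x y -> x \notin S -> y \notin S -> sc x y.
Proof. move=> hxy hx hy; apply/and3P; split => //; apply: connect1; by rewrite /del_rel hxy hx hy. Qed.

Lemma twin_adj x y : sc x y -> x != y -> e x y.
Proof. move=> h hne; have := tc h y; rewrite eqxx /= eq_sym (negbTE hne) /= => ->. by []. Qed.

Lemma twin_nb x y w : sc x y -> w != x -> w != y -> e x w = e y w.
Proof. move=> h h1 h2; have := tc h w; by rewrite (negbTE h1) (negbTE h2). Qed.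

Lemma D_twin K c c' : injective K -> sc c c' -> c != c' -> (K c < K c')%N ->
  D K c' = D K c + 2 + 2 * (\sum_u ((e c u && (K c < K u < K c')%N) : nat))%N%:Z.
Proof.
move=> Kinj hsc hne hlt.
have ecc' : e c c' by apply: twin_adj.
have key : D K c' - D K c = \sum_u (((u == c) : nat)%:Z + ((u == c') : nat)%:Z
     + 2 * ((e c u && (K c < K u < K c')%N) : nat)%:Z).
  rewrite /D -sumrB; apply: eq_bigr => u _.
  case: (eqVneq u c) => [->|huc].
    rewrite (eirr c) (esym c' c) ecc' (negbTE hne) /= (sg_lt hlt); lia.
  case: (eqVneq u c') => [->|huc'].
    rewrite (eirr c') ecc' /= ltnn andbF (sg_gt hlt); lia.
  rewrite -(twin_nb hsc huc huc') /=.
  case: (e c u) => /=; last by rewrite !mul0r subrr.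
  have h1 : K u != K c by apply/eqP => /Kinj /eqP; rewrite (negbTE huc).
  have h2 : K u != K c' by apply/eqP => /Kinj /eqP; rewrite (negbTE huc').
  case: (ltngtP (K u) (K c)) => hu; last by rewrite hu eqxx in h1.
    rewrite (sg_lt hu) (sg_lt (ltn_trans hu hlt)); lia.
  case: (ltngtP (K u) (K c')) => hu'; last by rewrite hu' eqxx in h2.
    rewrite (sg_lt hu') (sg_gt hu); lia.
  rewrite (sg_gt hu') (sg_gt hu); lia.
move: key; rewrite !big_split /= !sum_pred1 -mulr_sumr -sumZ => key.
apply/eqP; rewrite -subr_eq0; apply/eqP. rewrite -[D K c']addr0 -(subrr (D K c)).
move: key. set X := D K c'. set Y := D K c. set Z := Posz _. move=> key. lia.
Qed.


Lemma sum_key_le1 (k : T -> nat) (m : nat) : injective k -> (\sum_u ((k u == m) : nat) <= 1)%N.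
Proof.
move=> kinj; case: (pickP (fun u => k u == m)) => [u0 hu0|none].
  rewrite (bigD1 u0) //= hu0 big1 // => v hv. 
  apply/eqP; rewrite eqb0; apply/eqP => hk; move/eqP: hu0 => hu0.
  have : v = u0 by apply: kinj; rewrite hk hu0. by move/eqP; rewrite (negbTE hv).
by rewrite big1 // => u _; rewrite none.
Qed.

Lemma split2 (F : T -> int) (P : pred T) c c' : c != c' -> P c -> P c' ->
  \sum_(v | P v) F v = F c + F c' + \sum_(v | (P v) && (v != c) && (v != c')) F v.
Proof.
move=> hne pc pc'; rewrite (bigD1 c) //= (bigD1 c') /=; last by rewrite pc' eq_sym hne.
by rewrite addrA.
Qed.

Lemma fin_ineq (a b x y S1 S2 r : int) : a + b + 2*r <= x + y -> S2 <= S1 + 2*r -> a + b + S2 <= x + y + S1.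
Proof. lia. Qed.
Lemma fin_lt (a b x y S1 r : int) : a + b + 2*r <= x + y -> 0 < r -> a + b + S1 < x + y + S1.
Proof. lia. Qed.

Lemma move k c c' w : injective k -> sc c c' -> (k c < k c')%N ->
  (forall u, sc c u -> ~~ (k c < k u < k c')%N) -> e c w -> (k c < k w < k c')%N ->
  exists k', injective k' /\ Imb k' <= Imb k /\ Phi k' < Phi k.
Proof.
move=> kinj hsc hlt nob ecw hw.
have hne : c != c' by apply/eqP => h; rewrite h ltnn in hlt.
case/andP: (sc_notS hsc) => cS c'S.
have ecc' : e c c' by apply: twin_adj.
pose A u := (e c u && (k c < k u < k c')%N).
pose rn := (\sum_u (A u : nat))%N.
have rpos : (0 < rn)%N by rewrite /rn (bigD1 w) //= /A ecw hw.
have hy := D_twin kinj hsc hne hlt.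
have [H [hH hineq]] := @arith (D k c) (Posz rn) ltac:(by []).
have [hn Hhn] : exists hn : nat, H = hn%:Z by exists (absz H); lia.
subst H.
pose f κ := (\sum_u ((e c u && (k c < k u <= κ)%N) : nat))%N.
have fstep : forall i, (f i.+1 <= (f i).+1)%N.
  move=> i; apply: (@leq_trans (f i + \sum_u ((k u == i.+1) : nat))%N); last first.
    have := @sum_key_le1 k i.+1 kinj; lia.
  rewrite /f -big_split /=; apply: leq_sum => u _.
  case: (e c u) => //=; lia.
have f0 : f (k c) = 0%N by rewrite /f big1 // => u _; apply/eqP; rewrite eqb0; lia.
have fr : f (k c + (k c' - 1 - k c))%N = rn.
  rewrite /f /rn; apply: eq_bigr => u _; rewrite /A.
  have -> : (k c + (k c' - 1 - k c) = (k c').-1)%N by lia.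
  case: (e c u) => //=; congr nat_of_bool; apply/idP/idP; lia.
have [κ hκ fκ] := @nat_ivt f (k c) fstep (k c' - 1 - k c)%N hn ltac:(lia).
have fE : forall i, f i = (\sum_u ((e c u && (k c < k u <= i)%N) : nat))%N by [].
clearbody f. clear fstep f0 fr.
have AE : forall u, A u = (e c u && (k c < k u < k c')%N) by [].
have rnE : rn = (\sum_u (A u : nat))%N by [].
clearbody rn. clearbody A.
have hyr : D k c' = D k c + 2 + 2 * rn%:Z.
  by rewrite hy rnE (@eq_bigr _ _ _ _ _ _ _ (fun u => (A u : nat))) // => u _; rewrite AE.
pose k' u := if u == c then (3 * κ + 1)%N else if u == c' then (3 * κ + 2)%N else (3 * k u)%N.
have k'c : k' c = (3 * κ + 1)%N by rewrite /k' eqxx.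
have k'c' : k' c' = (3 * κ + 2)%N by rewrite /k' eq_sym (negbTE hne) eqxx.
have k'u : forall u, u != c -> u != c' -> k' u = (3 * k u)%N.
  by move=> u h1 h2; rewrite /k' (negbTE h1) (negbTE h2).
have k'inj : injective k'.
  have cls : forall x, [\/ x = c /\ k' x = (3 * κ + 1)%N, x = c' /\ k' x = (3 * κ + 2)%N |
                          k' x = (3 * k x)%N].
    move=> x; case: (eqVneq x c) => [->|xc]; first by apply: Or31.
    case: (eqVneq x c') => [->|xc']; first by apply: Or32.
    by apply: Or33; rewrite k'u.
  move=> u v.
  case: (cls u) => [[-> hu]|[-> hu]|hu]; case: (cls v) => [[-> hv]|[-> hv]|hv] //;
    rewrite hu hv => huv; try (exfalso; lia).
  apply: kinj; lia.
clearbody k'.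
exists k'; split => //.
have kne : forall u v, u != v -> k u != k v.
  by move=> u v huv; apply/eqP => /kinj /eqP; rewrite (negbTE huv).
have dch : forall v, D k' v - D k v = \sum_u ((e v u : nat)%:Z * (sg k' u v - sg k u v)).
  by move=> v; rewrite /D -sumrB; apply: eq_bigr => u _; exact: (Logic.eq_sym (mulrBr _ _ _)).
have hx' : D k' c = D k c + 2 * hn%:Z.
  have : D k' c - D k c = 2 * hn%:Z.
    rewrite dch -fκ fE sumZ mulr_sumr; apply: eq_bigr => u _.
    case: (eqVneq u c) => [->|uc]; first by rewrite (eirr c) /=; clear; lia.
    case: (eqVneq u c') => [->|uc'].
      rewrite ecc' /sg k'c k'c' /=; clear -hlt hκ; lia.
    have := kne _ _ uc. rewrite /sg k'c (k'u _ uc uc'). case: (e c u) => /=; clear -hκ; lia.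
  move=> hh; clear -hh; lia.
have hy' : D k' c' = D k' c + 2.
  have hlt' : (k' c < k' c')%N by rewrite k'c k'c'; clear; lia.
  rewrite (D_twin k'inj hsc hne hlt').
  rewrite big1 ?mulr0 ?addr0 // => u _.
  case: (eqVneq u c) => [->|uc]; first by rewrite (eirr c).
  case: (eqVneq u c') => [->|uc']; first by rewrite k'c k'c' ltnn !andbF.
  rewrite k'c k'c' (k'u _ uc uc'); case: (e c u) => //=.
  apply/eqP; rewrite eqb0; apply/negP => /andP [h1 h2]; clear -h1 h2; lia.
have hA : forall v, A v -> `|D k' v| <= `|D k v| + 2.
  move=> v; rewrite AE => /andP [ecv hv].
  have vc : v != c by apply/eqP => h; rewrite h ltnn in hv.
  have vc' : v != c' by apply/eqP => h; rewrite h ltnn andbF in hv.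
  have ec'v : e c' v by rewrite -(twin_nb hsc vc vc').
  have : D k' v - D k v = (sg k' c v - sg k c v) + (sg k' c' v - sg k c' v).
    rewrite dch (split2 _ (P := predT) hne) //= (esym v c) (esym v c') ecv ec'v /= !mul1r big1 ?addr0 //.
    move=> u /andP [uc uc']; rewrite /sg (k'u _ uc uc') (k'u _ vc vc').
    case: (e v u) => /=; clear; lia.
  rewrite /sg k'c k'c' (k'u _ vc vc'). clear -hv hκ hlt; lia.
have hO : forall v, v != c -> v != c' -> ~~ A v -> D k' v = D k v.
  move=> v vc vc' nA.
  have : D k' v - D k v = 0; last by move=> hh; clear -hh; lia.
  rewrite dch big1 // => u _.
  have := kne _ _ vc; have := kne _ _ vc'.
  case: (eqVneq u c) => [->|uc].
    rewrite esym; move: nA; rewrite AE /sg k'c (k'u _ vc vc'); case: (e c v) => /=; clear -hκ hlt; lia.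
  case: (eqVneq u c') => [->|uc'].
    rewrite esym -(twin_nb hsc vc vc'); move: nA; rewrite AE /sg k'c' (k'u _ vc vc'); case: (e c v) => /=; clear -hκ hlt; lia.
  rewrite /sg (k'u _ uc uc') (k'u _ vc vc'); case: (e v u) => /=; clear; lia.
have Ac : A c = false by rewrite AE (eirr c).
have Ac' : A c' = false by rewrite AE (ltnn (k c')) !andbF.
have sumA : \sum_(v | predT v && (v != c) && (v != c')) (A v : nat)%:Z = rn%:Z.
  by rewrite rnE sumZ (split2 _ (P := predT) hne) // Ac Ac' add0r.
split.
- rewrite /Imb (split2 _ (P := predT) hne) // [X in _ <= X](split2 _ (P := predT) hne) //.
  have hR : \sum_(v | predT v && (v != c) && (v != c')) `|D k' v| <=
            \sum_(v | predT v && (v != c) && (v != c')) (`|D k v| + 2 * (A v : nat)%:Z).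
    apply: ler_sum => v /andP [/andP [_ vc] vc'].
    case: (boolP (A v)) => hAv; first by rewrite mulr1; apply: hA.
    by rewrite (hO v vc vc' hAv) mulr0 addr0.
  move: hR; rewrite big_split -mulr_sumr sumA => hR.
  move: hineq; rewrite /keep hyr hy' hx' => hineq.
  exact: fin_ineq hineq hR.
- rewrite /Phi (split2 _ (P := fun v => v \notin S) hne) // [X in _ < X](split2 _ (P := fun v => v \notin S) hne) //.
  have -> : \sum_(v | (v \notin S) && (v != c) && (v != c')) `|D k' v| =
            \sum_(v | (v \notin S) && (v != c) && (v != c')) `|D k v|.
    apply: eq_bigr => v /andP [/andP [vS vc] vc']; rewrite hO //.
    apply/negP; rewrite AE => /andP [ecv hv]; move: (nob v (sc_edge ecv cS vS)); by rewrite hv.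
  move: hineq; rewrite /keep hyr hy' hx' => hineq.
  apply: fin_lt hineq _. clear -rpos; lia.
Qed.

Definition noviol k := forall c1 c2 w, sc c1 c2 -> e c1 w -> w \in S -> ~~ (k c1 < k w < k c2)%N.

Lemma Phi_ge0 k : 0 <= Phi k.
Proof. by apply: sumr_ge0 => v _; rewrite normr_ge0. Qed.

Lemma viol_move k : injective k -> ~ noviol k ->
  exists k', injective k' /\ Imb k' <= Imb k /\ Phi k' < Phi k.
Proof.
move=> kinj nv.
have [c1 [c2 [w [h12 [e1w [wS hb]]]]]] : exists c1 c2 w, sc c1 c2 /\ e c1 w /\ w \in S /\ (k c1 < k w < k c2)%N.
  apply: NNPP => hn; apply: nv => c1 c2 w h1 h2 h3; apply/negP => h4; apply: hn; by exists c1, c2, w.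
case/andP: (sc_notS h12) => c1S c2S.
case/andP: hb => hb1 hb2.
have P1 : sc c1 c1 && (k c1 < k w)%N by rewrite sc_refl.
have P2 : sc c1 c2 && (k w < k c2)%N by rewrite h12.
case: (@arg_maxnP T c1 (fun u => sc c1 u && (k u < k w)%N) k P1) => c /andP [hc1 hcw] cmax.
case: (@arg_minnP T c2 (fun u => sc c1 u && (k w < k u)%N) k P2) => c' /andP [hc1' hwc'] cmin.
have hcc' : sc c c' := sc_trans (sc_sym hc1) hc1'.
apply: (@move k c c' w kinj hcc').
- exact: ltn_trans hcw hwc'.
- move=> u hcu; apply/negP => /andP [h1 h2].
  have hu1 : sc c1 u := sc_trans hc1 hcu.
  case: (ltngtP (k u) (k w)) => h.
  + have := cmax u; rewrite hu1 h => /(_ isT) hh. move: hh; rewrite /geq /= => hh. clear -hh h1; lia.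
  + have := cmin u; rewrite hu1 h => /(_ isT) hh. move: hh; rewrite /leq /= => hh. clear -hh h2; lia.
  + have huw : u = w by apply: kinj.
    by case/andP: (sc_notS hcu) => _; rewrite huw wS.
- have wc1 : w != c1 by apply/eqP => h; rewrite h (negbTE c1S) in wS.
  have wc : w != c by apply/eqP => h; case/andP: (sc_notS hc1) => _; rewrite -h wS.
  by rewrite -(twin_nb hc1 wc1 wc).
- by rewrite hcw hwc'.
Qed.

Lemma reduce n : forall k, injective k -> Phi k <= n%:Z ->
  exists k', injective k' /\ Imb k' <= Imb k /\ noviol k'.
Proof.
elim: n => [|n IH] k kinj hP; (case: (classic (noviol k)) => hv; first by exists k);
  have [k1 [k1inj [hI hPh]]] := viol_move kinj hv.
  have := Phi_ge0 k1; move: hP hPh; clear; lia.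
have [k2 [k2inj [hI2 hv2]]] := IH k1 k1inj ltac:(move: hP hPh; clear; lia).
exists k2; split => //; split => //; exact: le_trans hI2 hI.
Qed.

Lemma compress k : injective k -> noviol k ->
  exists k2, injective k2 /\ Imb k2 = Imb k /\
    (forall x y z, sc x y -> (k2 x <= k2 z <= k2 y)%N -> sc x z).
Proof.
move=> kinj nv.
pose mm v := if v \in S then k v else k [arg min_(u < v | sc v u) k u].
have mS : forall v, v \in S -> mm v = k v by move=> v vS; rewrite /mm vS.
have mspec : forall v, v \notin S -> exists a, [/\ sc v a, mm v = k a & forall u, sc v u -> (k a <= k u)%N].
  move=> v vS; rewrite /mm (negbTE vS).
  case: (@arg_minnP T v (fun u => sc v u) k (sc_refl vS)) => a ha amin; by exists a.
have meq : forall x y, sc x y -> mm x = mm y.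
  move=> x y hxy; case/andP: (sc_notS hxy) => xS yS.
  have [a [ha -> amin]] := mspec x xS; have [b [hb -> bmin]] := mspec y yS.
  have h1 := amin b (sc_trans hxy hb); have h2 := bmin a (sc_trans (sc_sym hxy) ha).
  apply/eqP; rewrite eqn_leq h1 h2. by [].
pose B := (\sum_u k u).+1.
have kB : forall u, (k u < B)%N by move=> u; rewrite ltnS (bigD1 u) //= leq_addr.
pose k2 v := (mm v * B + k v)%N.
have lex : forall u v, (k2 u < k2 v)%N = ((mm u < mm v) || ((mm u == mm v) && (k u < k v)))%N.
  by move=> u v; rewrite /k2 lexlt.
have k2inj : injective k2.
  move=> u v h; apply: kinj.
  have : ((k2 u) %% B = (k2 v) %% B)%N by rewrite h.
  by rewrite /k2 !modnMDl !modn_small.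
have kne : forall u v, u != v -> k u != k v.
  by move=> u v huv; apply/eqP => /kinj /eqP; rewrite (negbTE huv).
have epres : forall u v, e v u -> (k2 u < k2 v)%N = (k u < k v)%N.
  move=> u v evu; rewrite lex.
  have uv : u != v by apply/eqP => h; rewrite h eirr in evu.
  case: (boolP (u \in S)) => uS; case: (boolP (v \in S)) => vS.
  - rewrite !mS //. by case: ltngtP.
  - have [a [ha -> amin]] := mspec v vS; rewrite mS //.
    have au : a != u by apply/eqP => h; case/andP: (sc_notS ha) => _; rewrite h uS.
    have := kne _ _ au; have := amin v (sc_refl vS).
    have eau : e a u.
      case: (eqVneq a v) => [->//|av].
      by rewrite -(twin_nb ha); rewrite // eq_sym.
    have := nv a v u (sc_sym ha) eau uS.
    move: (k a) (k u) (k v) => x y z; clear; move=> h1 h2 h3.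
    apply/idP/idP; lia.
  - have [a [ha -> amin]] := mspec u uS; rewrite (mS v) //.
    have av : a != v by apply/eqP => h; case/andP: (sc_notS ha) => _; rewrite h vS.
    have := kne _ _ av; have := amin u (sc_refl uS).
    have eav : e a v.
      have euv : e u v by rewrite esym.
      case: (eqVneq a u) => [->//|au].
      by rewrite -(twin_nb ha); rewrite // eq_sym.
    have := kne _ _ uv.
    have := nv a u v (sc_sym ha) eav vS.
    move: (k a) (k u) (k v) => x y z; clear; move=> h1 h4 h2 h3.
    apply/idP/idP; lia.
  - rewrite (meq u v) ?ltnn ?eqxx //=.
    apply: sc_sym; exact: sc_edge.
exists k2; split => //; split.
  apply: eq_bigr => v _; congr Num.norm; apply: D_ext => u evu; split; first exact: epres.
  apply: epres; by rewrite esym.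
move=> x y z hxy /andP [hxz hzy].
case/andP: (sc_notS hxy) => xS yS.
have h1 : (mm x <= mm z)%N.
  rewrite leqNgt; apply/negP => hlt; move: hxz; by rewrite leqNgt lex hlt.
have h2 : (mm z <= mm y)%N.
  rewrite leqNgt; apply/negP => hlt; move: hzy; by rewrite leqNgt lex hlt.
have hm : mm z = mm x by rewrite -(meq _ _ hxy) in h2; apply/eqP; rewrite eqn_leq h1 h2.
have [a [ha hma amin]] := mspec x xS.
case: (boolP (z \in S)) => zS.
  rewrite mS // hma in hm; have hza := kinj _ _ hm.
  by case/andP: (sc_notS ha) => _; rewrite -hza zS.
have [b [hb hmb bmin]] := mspec z zS.
rewrite hmb hma in hm; have hba := kinj _ _ hm.
apply: sc_trans ha _; apply: sc_sym; by rewrite -hba.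
Qed.

End Graph.

Lemma sort_index (T : finType) (K : T -> nat) : injective K ->
  is_ordering (sort (fun a b => (K a <= K b)%N) (enum T)) /\
  forall x y, (index x (sort (fun a b => (K a <= K b)%N) (enum T)) <
               index y (sort (fun a b => (K a <= K b)%N) (enum T)))%N = (K x < K y)%N.
Proof.
move=> Kinj; set leT := (fun a b : T => (K a <= K b)%N); set s := sort leT (enum T).
have memS : forall x, x \in s by move=> x; rewrite /s mem_sort mem_enum.
have ss : sorted leT s by apply: sort_sorted => a b; apply: leq_total.
have tr : transitive leT by move=> y x z; apply: leq_trans.
split; first by rewrite /is_ordering /s perm_sort perm_refl.
move=> x y; apply/idP/idP => h.
  have hle := sorted_ltn_index tr ss x y (memS x) (memS y) h.
  have xy : x != y by apply/eqP => hxy; rewrite hxy ltnn in h.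
  rewrite ltn_neqAle andbC; rewrite /leT in hle; rewrite hle /=; apply/eqP => /Kinj /eqP; by rewrite (negbTE xy).
case: (ltngtP (index x s) (index y s)) => // h2.
  have := sorted_ltn_index tr ss y x (memS y) (memS x) h2; rewrite /leT leqNgt h. by [].
have := index_inj x (memS x) (memS y) h2 => hxy; by rewrite hxy ltnn in h.
Qed.

Local Close Scope ring_scope.

Theorem corollary1 (T : finType) (e : rel T) (S : {set T}) :
  simple_graph e -> twin_cover e S ->
  exists s : seq T, imbalance_optimal e s /\ components_consecutive e S s.
Proof.
move=> [esym eirr] tc.
pose P n := has (fun s => imbalance e s == n) (permutations (enum T)).
have exP : exists n, P n.
  exists (imbalance e (enum T)); apply/hasP; exists (enum T) => //; by rewrite mem_permutations.
case: (ex_minnP exP) => n0 /hasP [s0 hs0 /eqP hn0] hmin.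
have s0ord : is_ordering s0 by rewrite /is_ordering -mem_permutations.
have hopt : forall s', is_ordering s' -> imbalance e s0 <= imbalance e s'.
  move=> s' hs'; rewrite hn0; apply: hmin; apply/hasP; exists s' => //; by rewrite mem_permutations.
pose k0 := fun u => index u s0.
have mem0 : forall x, x \in s0 by move=> x; rewrite (perm_mem s0ord) mem_enum.
have k0inj : injective k0 by move=> x y; apply: (index_inj x (mem0 x) (mem0 y)).
have [n hn] : exists n : nat, (Phi e S k0 <= n%:Z)%R by exists (absz (Phi e S k0)); lia.
have [k1 [k1inj [hI1 hv1]]] := reduce esym eirr tc k0inj hn.
have [k2 [k2inj [hI2 hc2]]] := compress esym eirr tc k1inj hv1.
have [sord hidx] := sort_index k2inj.
set s := sort _ _ in sord hidx.
exists s; split; last first.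
  have hle : forall x y, (index x s <= index y s) = (k2 x <= k2 y).
    by move=> x y; rewrite leqNgt hidx -leqNgt.
  move=> x y z hxy; rewrite !hle; exact: hc2.
split => // s' hs'; apply: leq_trans (hopt s' hs').
have hs : Posz (imbalance e s) = Imb e k2.
  rewrite imbalanceE; apply: eq_bigr => v _; congr Num.norm; apply: D_ext => u _.
  by rewrite !hidx.
have : (Posz (imbalance e s) <= Posz (imbalance e s0))%R.
  by rewrite hs hI2 imbalanceE; exact: hI1.
by rewrite lez_nat.
Qed.
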